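(* Let $\mathcal{T}$ be a $\operatorname{Hom}$-finite Krull–Schmidt triangulated category over an algebraically closed field, $\mathcal{I}$ a functorially finite ideal, and $X\xrightarrow{f}Y\xrightarrow{g}Z\xrightarrow{h}X[1]$ a triangle. Then (1) $g$ is a right $\mathcal{I}$-approximation (resp. an $\mathcal{I}$-sink map) if and only if $h$ is a left $\mathrm{Gh}_{\mathcal{I}}$-approximation (resp. a $\mathrm{Gh}_{\mathcal{I}}$-source map); (2) $f$ is a left $\mathcal{I}$-approximation (resp. an $\mathcal{I}$-source map) if and only if $h$ is a right $\mathrm{CoGh}_{\mathcal{I}[1]}$-approximation (resp. a $\mathrm{CoGh}_{\mathcal{I}[1]}$-sink map).
   Context: Composition of $f:X\to Y$, $g:Y\to Z$ is $gf$. An ideal: subgroups $\mathcal{I}(X,Y)\subseteq\operatorname{Hom}(X,Y)$ closed under composition. $\mathcal{I}[1]=\{f[1]:f\in\mathcal{I}\}$. $\mathrm{Gh}_{\mathcal{I}}=\{f: fi=0\ \forall\text{ composable } i\in\mathcal{I}\}$, $\mathrm{CoGh}_{\mathcal{I}}=\{f: if=0\ \forall\text{ composable } i\in\mathcal{I}\}$. For an ideal $\mathcal{A}$, a left (resp. right) $\mathcal{A}$-approximation of $T$ is a morphism in $\mathcal{A}$ starting (resp. ending) at $T$ through which all morphisms of $\mathcal{A}$ starting (resp. ending) at $T$ factor; $\mathcal{A}$ is functorially finite if all objects have both. An $\mathcal{A}$-source (resp. $\mathcal{A}$-sink) map is a left minimal left (resp. right minimal right) $\mathcal{A}$-approximation;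 $f$ is left minimal if $gf=f$ forces $g$ invertible, right minimal if $fg=f$ forces $g$ invertible. *)

(* Defs.v *)
From HB Require Import structures.
From mathcomp Require Import all_boot all_algebra.
Set Implicit Arguments. Unset Strict Implicit. Unset Printing Implicit Defensive.
Import GRing.Theory.
Local Open Scope ring_scope.

(* Composition is written as in the paper: [cmp g f] = gf (first f, then g). *)
Record LinCat (k : fieldType) := {
  Obj :> Type;
  Mor : Obj -> Obj -> vectType k;
  idm : forall X, Mor X X;
  cmp : forall X Y Z, Mor Y Z -> Mor X Y -> Mor X Z;
  cmpA : forall X Y Z W (h : Mor Z W) (g : Mor Y Z) (f : Mor X Y),
      cmp h (cmp g f) = cmp (cmp h g) f;
  cmp1l : forall X Y (f : Mor X Y), cmp (idm Y) f = f;
  cmp1r : forall X Y (f : Mor X Y), cmp f (idm X) = f;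
  cmp_linl : forall X Y Z (f : Mor X Y) (a : k) (g1 g2 : Mor Y Z),
      cmp (a *: g1 + g2) f = a *: cmp g1 f + cmp g2 f;
  cmp_linr : forall X Y Z (g : Mor Y Z) (a : k) (f1 f2 : Mor X Y),
      cmp g (a *: f1 + f2) = a *: cmp g f1 + cmp g f2
}.
Arguments Mor {k} C X Y : rename.
Arguments idm {k C} X : rename.
Arguments cmp {k C X Y Z} g f : rename.

Section Basic.
Variables (k : fieldType) (C : LinCat k).

Definition is_iso (X Y : C) (f : Mor C X Y) : Prop :=
  exists g : Mor C Y X, cmp g f = idm X /\ cmp f g = idm Y.

Definition local_obj (X : C) : Prop :=
  idm X != 0 /\ forall e : Mor C X X, is_iso e \/ is_iso (idm X - e).

Definition ks_decomposable (X : C) : Prop :=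
  exists (n : nat) (Xs : 'I_n -> C)
         (inj : forall i, Mor C (Xs i) X) (prj : forall i, Mor C X (Xs i)),
    [/\ forall i, cmp (prj i) (inj i) = idm (Xs i),
        forall i j, i != j -> cmp (prj i) (inj j) = 0,
        \sum_(i < n) cmp (inj i) (prj i) = idm X
      & forall i, local_obj (Xs i)].

Definition additive : Prop :=
  (exists O : C, idm O = 0) /\
  forall X1 X2 : C, exists (S : C) (i1 : Mor C X1 S) (i2 : Mor C X2 S)
                           (p1 : Mor C S X1) (p2 : Mor C S X2),
    [/\ cmp p1 i1 = idm X1, cmp p2 i2 = idm X2, cmp p2 i1 = 0, cmp p1 i2 = 0
      & cmp i1 p1 + cmp i2 p2 = idm S].

Definition krull_schmidt : Prop := forall X : C, ks_decomposable X.
End Basic.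

Record TriStruct (k : fieldType) (C : LinCat k) := {
  sh : C -> C;
  shm : forall X Y : C, Mor C X Y -> Mor C (sh X) (sh Y);
  shm_lin : forall X Y (a : k) (f g : Mor C X Y),
      shm (a *: f + g) = a *: shm f + shm g;
  shm_id : forall X, shm (idm X) = idm (sh X);
  shm_cmp : forall X Y Z (g : Mor C Y Z) (f : Mor C X Y),
      shm (cmp g f) = cmp (shm g) (shm f);
  shm_bij : forall X Y, bijective (@shm X Y);
  sh_esurj : forall Y : C, exists (X : C) (u : Mor C (sh X) Y), is_iso u;
  dist : forall X Y Z : C, Mor C X Y -> Mor C Y Z -> Mor C Z (sh X) -> Prop;
  TR1_iso : forall X Y Z (f : Mor C X Y) (g : Mor C Y Z) (h : Mor C Z (sh X))
      X' Y' Z' (f' : Mor C X' Y') (g' : Mor C Y' Z') (h' : Mor C Z' (sh X'))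
      (a : Mor C X X') (b : Mor C Y Y') (c : Mor C Z Z'),
      dist f g h -> is_iso a -> is_iso b -> is_iso c ->
      cmp f' a = cmp b f -> cmp g' b = cmp c g -> cmp h' c = cmp (shm a) h ->
      dist f' g' h';
  TR1_id : forall (X O : C), idm O = 0 ->
      dist (idm X) (0 : Mor C X O) (0 : Mor C O (sh X));
  TR1_ext : forall X Y (f : Mor C X Y),
      exists (Z : C) (g : Mor C Y Z) (h : Mor C Z (sh X)), dist f g h;
  TR2 : forall X Y Z (f : Mor C X Y) (g : Mor C Y Z) (h : Mor C Z (sh X)),
      dist f g h <-> dist g h (- shm f);
  TR3 : forall X Y Z (f : Mor C X Y) (g : Mor C Y Z) (h : Mor C Z (sh X))
      X' Y' Z' (f' : Mor C X' Y') (g' : Mor C Y' Z') (h' : Mor C Z' (sh X'))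
      (a : Mor C X X') (b : Mor C Y Y'),
      dist f g h -> dist f' g' h' -> cmp b f = cmp f' a ->
      exists c : Mor C Z Z', cmp c g = cmp g' b /\ cmp h' c = cmp (shm a) h;
  TR4 : forall X Y Z (f : Mor C X Y) (g : Mor C Y Z)
      Z' (u : Mor C Y Z') (u' : Mor C Z' (sh X))
      X' (v : Mor C Z X') (v' : Mor C X' (sh Y))
      Y' (w : Mor C Z Y') (w' : Mor C Y' (sh X)),
      dist f u u' -> dist g v v' -> dist (cmp g f) w w' ->
      exists (a : Mor C Z' Y') (b : Mor C Y' X'),
        [/\ dist a b (cmp (shm u) v'),
            cmp a u = cmp w g, cmp w' a = u',
            cmp b w = v & cmp v' b = cmp (shm f) w']
}.
Arguments sh {k C} T X : rename.
Arguments shm {k C} T {X Y} f : rename.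
Arguments dist {k C} T {X Y Z} f g h : rename.

Section Ideals.
Variables (k : fieldType) (C : LinCat k).

Definition morclass := forall X Y : C, Mor C X Y -> Prop.

Definition ideal (I : morclass) : Prop :=
  [/\ forall X Y, I X Y 0,
      forall X Y (f g : Mor C X Y), I X Y f -> I X Y g -> I X Y (f - g),
      forall X Y Z (g : Mor C Y Z) (f : Mor C X Y), I X Y f -> I X Z (cmp g f)
    & forall X Y Z (g : Mor C Y Z) (f : Mor C X Y), I Y Z g -> I X Z (cmp g f)].

Definition Gh (I : morclass) : morclass := fun X Y f =>
  forall W (i : Mor C W X), I W X i -> cmp f i = 0.

Definition CoGh (I : morclass) : morclass := fun X Y f =>
  forall W (i : Mor C Y W), I Y W i -> cmp i f = 0.

Definition left_approx (A : morclass) (T B : C) (a : Mor C T B) : Prop :=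
  A T B a /\ forall B' (a' : Mor C T B'), A T B' a' ->
    exists t : Mor C B B', a' = cmp t a.

Definition right_approx (A : morclass) (T B : C) (a : Mor C B T) : Prop :=
  A B T a /\ forall B' (a' : Mor C B' T), A B' T a' ->
    exists t : Mor C B' B, a' = cmp a t.

Definition left_minimal (X Y : C) (f : Mor C X Y) : Prop :=
  forall g : Mor C Y Y, cmp g f = f -> is_iso g.

Definition right_minimal (X Y : C) (f : Mor C X Y) : Prop :=
  forall g : Mor C X X, cmp f g = f -> is_iso g.

Definition source_map (A : morclass) (T B : C) (a : Mor C T B) : Prop :=
  left_approx A a /\ left_minimal a.

Definition sink_map (A : morclass) (T B : C) (a : Mor C B T) : Prop :=
  right_approx A a /\ right_minimal a.

Definition functorially_finite (A : morclass) : Prop :=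
  forall T : C,
    (exists (B : C) (a : Mor C T B), left_approx A a) /\
    (exists (B : C) (a : Mor C B T), right_approx A a).

Definition hcast (X Y X' Y' : C) (eX : X = X') (eY : Y = Y') (f : Mor C X Y)
  : Mor C X' Y' :=
  match eX in _ = X1, eY in _ = Y1 return Mor C X1 Y1 with
  | erefl, erefl => f end.

Definition shift_class (T : TriStruct C) (I : morclass) : morclass :=
  fun A B u => exists (X Y : C) (f : Mor C X Y) (eA : sh T X = A) (eB : sh T Y = B),
    I X Y f /\ u = hcast eA eB (shm T f).
End Ideals.
Arguments left_approx {k C} A {T B} a.
Arguments right_approx {k C} A {T B} a.
Arguments source_map {k C} A {T B} a.
Arguments sink_map {k C} A {T B} a.

(* Main.v *)
From Pilot Require Import Defs.
From HB Require Import structures.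
From mathcomp Require Import all_boot all_algebra.
Set Implicit Arguments. Unset Strict Implicit. Unset Printing Implicit Defensive.
Import GRing.Theory.
Local Open Scope ring_scope.

Section Lin.
Variables (k : fieldType) (C : LinCat k).

Lemma cmpDl X Y Z (f : Mor C X Y) (g1 g2 : Mor C Y Z) : cmp (g1 + g2) f = cmp g1 f + cmp g2 f.
Proof. by have := cmp_linl f 1 g1 g2; rewrite !scale1r. Qed.
Lemma cmpDr X Y Z (g : Mor C Y Z) (f1 f2 : Mor C X Y) : cmp g (f1 + f2) = cmp g f1 + cmp g f2.
Proof. by have := cmp_linr g 1 f1 f2; rewrite !scale1r. Qed.
Lemma cmp0l X Y Z (f : Mor C X Y) : cmp (0 : Mor C Y Z) f = 0.
Proof. by apply: (addrI (cmp (0 : Mor C Y Z) f)); rewrite addr0 -cmpDl addr0. Qed.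
Lemma cmp0r X Y Z (g : Mor C Y Z) : cmp g (0 : Mor C X Y) = 0.
Proof. by apply: (addrI (cmp g (0 : Mor C X Y))); rewrite addr0 -cmpDr addr0. Qed.
Lemma cmpNl X Y Z (f : Mor C X Y) (g : Mor C Y Z) : cmp (- g) f = - cmp g f.
Proof. by apply/eqP; rewrite -addr_eq0 -cmpDl addNr cmp0l. Qed.
Lemma cmpNr X Y Z (f : Mor C X Y) (g : Mor C Y Z) : cmp g (- f) = - cmp g f.
Proof. by apply/eqP; rewrite -addr_eq0 -cmpDr addNr cmp0r. Qed.
Lemma cmpBl X Y Z (f : Mor C X Y) (g1 g2 : Mor C Y Z) : cmp (g1 - g2) f = cmp g1 f - cmp g2 f.
Proof. by rewrite cmpDl cmpNl. Qed.
Lemma cmpBr X Y Z (g : Mor C Y Z) (f1 f2 : Mor C X Y) : cmp g (f1 - f2) = cmp g f1 - cmp g f2.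
Proof. by rewrite cmpDr cmpNr. Qed.

Definition lcmp (Y : C) (s : Mor C Y Y) : Mor C Y Y -> Mor C Y Y := fun x => cmp s x.
Lemma lcmp_lin (Y : C) (s : Mor C Y Y) : linear (lcmp s).
Proof. by move=> a x y; rewrite /lcmp cmp_linr. Qed.
HB.instance Definition _ (Y : C) (s : Mor C Y Y) :=
  GRing.isLinear.Build k (Mor C Y Y) (Mor C Y Y) _ (lcmp s) (lcmp_lin s).

Lemma fd_inv (Y : C) (e s : Mor C Y Y) : cmp e s = idm Y -> cmp s e = idm Y.
Proof.
move=> es.
pose L := linfun (lcmp s).
have LE x : L x = cmp s x by rewrite lfunE.
have injL : injective L.
  by move=> x y; rewrite !LE => /(congr1 (cmp e)); rewrite !cmpA es !cmp1l.
have k0 : lker L == 0%VS by apply/lker0P.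
have imL : limg L = fullv.
  apply/eqP; rewrite eqEdim subvf limg_dim_eq ?leqnn //.
  by rewrite (eqP k0) capv0.
have ht : idm Y \in limg L by rewrite imL memvf.
have h2 := limg_lfunVK ht.
rewrite LE in h2.
move: h2; set u := (L^-1)%VF (idm Y) => h2.
have -> : e = u by rewrite -[e]cmp1r -h2 cmpA es cmp1l.
exact: h2.
Qed.

Lemma hcastE (P Q R : C) (e : P = Q) (m : Mor C P R) :
  hcast e erefl m = cmp m (hcast e erefl (idm P)).
Proof. by case: Q / e; rewrite /= cmp1r. Qed.

Variable (T : TriStruct C).

Lemma shmD X Y (f g : Mor C X Y) : shm T (f + g) = shm T f + shm T g.
Proof. by have := shm_lin T 1 f g; rewrite !scale1r. Qed.
Lemma shm0 X Y : shm T (0 : Mor C X Y) = 0.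
Proof. by apply: (addrI (shm T (0 : Mor C X Y))); rewrite addr0 -shmD addr0. Qed.
Lemma shmN X Y (f : Mor C X Y) : shm T (- f) = - shm T f.
Proof. by apply/eqP; rewrite -addr_eq0 -shmD addNr shm0. Qed.
Lemma shm_inj X Y : injective (@shm _ _ T X Y).
Proof. exact: bij_inj (shm_bij T X Y). Qed.
Lemma shm_surj X Y (v : Mor C (sh T X) (sh T Y)) : exists u, v = shm T u.
Proof.
have [g _ gK] := shm_bij T X Y. by exists (g v); rewrite gK.
Qed.
Lemma iso_shm X Y (a : Mor C X Y) : is_iso (shm T a) -> is_iso a.
Proof.
move=> [c' [H1 H2]]; have [a' E] := shm_surj c'; subst c'.
exists a'; split; apply: shm_inj; by rewrite shm_cmp shm_id.
Qed.
Lemma shm_iso X Y (a : Mor C X Y) : is_iso a -> is_iso (shm T a).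
Proof.
move=> [a' [H1 H2]]; exists (shm T a'); split; by rewrite -shm_cmp ?H1 ?H2 shm_id.
Qed.

Lemma rotT X Y Z (f : Mor C X Y) (g : Mor C Y Z) (h : Mor C Z (sh T X)) :
  dist T f g h -> dist T g h (- shm T f).
Proof. by move/TR2. Qed.

Variables (O : C) (HO : idm O = 0).

Lemma compz X Y Z (f : Mor C X Y) (g : Mor C Y Z) (h : Mor C Z (sh T X)) :
  dist T f g h -> cmp g f = 0.
Proof.
move=> d.
have d0 := TR1_id T X HO.
have E : cmp f (idm X) = cmp f (idm X) by [].
have [c [H1 H2]] := TR3 d0 d E.
by rewrite -H1 cmp0r.
Qed.

Lemma EX A B D (u : Mor C A B) (v : Mor C B D) (w : Mor C D (sh T A)) :
  dist T u v w -> forall W (y : Mor C W B), cmp v y = 0 -> exists t, y = cmp u t.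
Proof.
move=> d W y vy.
have d0 := rotT (TR1_id T W HO).
have E : cmp (0 : Mor C O D) (0 : Mor C W O) = cmp v y by rewrite vy cmp0r.
have [c [H1 H2]] := TR3 d0 (rotT d) E.
have [t E'] := shm_surj c; subst c.
exists t; apply: shm_inj; apply: oppr_inj.
by rewrite shm_cmp -cmpNl H2 shm_id cmpNr cmp1r.
Qed.

Lemma shO : idm (sh T O) = 0.
Proof. by rewrite -shm_id HO shm0. Qed.

Lemma CEX A B D (u : Mor C A B) (v : Mor C B D) (w : Mor C D (sh T A)) :
  dist T u v w -> forall W (y : Mor C B W), cmp y u = 0 -> exists t, y = cmp t v.
Proof.
move=> d W y yu.
have [Z' [g' [h' d']]] := TR1_ext T (0 : Mor C O W).
have h0 : h' = 0 by rewrite -[h']cmp1l shO cmp0l.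
have [t' Ht'] : exists t', idm Z' = cmp g' t'.
  apply: (EX (rotT d')); by rewrite cmp1r.
have tg : cmp t' g' = idm W.
  apply/eqP; rewrite -subr_eq0; apply/eqP.
  have [s ->] : exists s, cmp t' g' - idm W = cmp (0 : Mor C O W) s.
    apply: (EX d'); by rewrite cmpBr cmpA -Ht' cmp1l cmp1r subrr.
  by rewrite cmp0l.
have E : cmp y u = cmp (0 : Mor C O W) (0 : Mor C A O) by rewrite yu cmp0r.
have [c [H1 H2]] := TR3 d d' E.
by exists (cmp t' c); rewrite -cmpA H1 cmpA tg cmp1l.
Qed.

Lemma L1 A B D (u : Mor C A B) (v : Mor C B D) (w : Mor C D (sh T A)) (phi : Mor C B B) (a : Mor C A A) :
  dist T u v w -> cmp v phi = v -> is_iso a -> cmp phi u = cmp u a -> is_iso phi.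
Proof.
move=> d vp [a' [aa' a'a]] pu.
have [t Ht] : exists t, phi - idm B = cmp u t.
  by apply: (EX d); rewrite cmpBr vp cmp1r subrr.
have ps : cmp phi (idm B - cmp u (cmp a' t)) = idm B.
  rewrite cmpBr cmp1r cmpA pu -(cmpA u) (cmpA a) a'a cmp1l -Ht.
  by rewrite opprB addrC subrK.
by exists (idm B - cmp u (cmp a' t)); split => //; apply: fd_inv ps.
Qed.

Lemma L2 A B D (u : Mor C A B) (v : Mor C B D) (w : Mor C D (sh T A)) (phi : Mor C B B) (c : Mor C D D) :
  dist T u v w -> cmp phi u = u -> is_iso c -> cmp v phi = cmp c v -> is_iso phi.
Proof.
move=> d pu [c' [cc' c'c]] vp.
have [t Ht] : exists t, phi - idm B = cmp t v.
  by apply: (CEX d); rewrite cmpBl pu cmp1l subrr.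
have zp : cmp (idm B - cmp t (cmp c' v)) phi = idm B.
  rewrite cmpBl cmp1l -!cmpA vp (cmpA c') cc' cmp1l -Ht.
  by rewrite opprB addrC subrK.
by exists (idm B - cmp t (cmp c' v)); split => //; apply: fd_inv zp.
Qed.
End Lin.
Section Main.
Variables (k : fieldType) (C : LinCat k) (T : TriStruct C) (O : C) (HO : idm O = 0).
Variables (I : morclass C) (HI : ideal I) (Hff : functorially_finite I).

Lemma P1F X Y Z (f : Mor C X Y) (g : Mor C Y Z) (h : Mor C Z (sh T X)) :
  dist T f g h -> right_approx I g -> left_approx (Gh I) h.
Proof.
move=> d [Ig Hg]; split.
  move=> W i /Hg [t ->]; by rewrite cmpA (compz HO (rotT d)) cmp0l.
move=> B' a' Ha'.
exact: (CEX HO (rotT d) (Ha' _ _ Ig)).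
Qed.

Lemma P1B X Y Z (f : Mor C X Y) (g : Mor C Y Z) (h : Mor C Z (sh T X)) :
  dist T f g h -> left_approx (Gh I) h -> right_approx I g.
Proof.
move=> d [Gh_h Hh].
case: HI => _ _ IL IR.
have [_ [Y0 [g0 [Ig0 Hg0]]]] := Hff Z.
have [Z0' [h0 [w0 d0]]] := TR1_ext T g0.
have Gh0 : Gh I h0.
  move=> W i /Hg0 [t ->]; by rewrite cmpA (compz HO d0) cmp0l.
have [s Hs] := Hh _ _ Gh0.
have [t Ht] : exists t, g = cmp g0 t.
  apply: (EX HO d0); by rewrite Hs -cmpA (compz HO (rotT d)) cmp0r.
split; first by rewrite Ht; apply: IR.
move=> B' a' Ia'; apply: (EX HO (rotT d)); exact: Gh_h.
Qed.

Lemma P1mF X Y Z (f : Mor C X Y) (g : Mor C Y Z) (h : Mor C Z (sh T X)) :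
  dist T f g h -> sink_map I g -> source_map (Gh I) h.
Proof.
move=> d [ag mg]; split; first exact: P1F d ag.
move=> phi ph.
have d2 := rotT (rotT d).
have E : cmp phi h = cmp h (idm Z) by rewrite cmp1r.
have [c [H1 H2]] := TR3 d2 d2 E.
have [e Ee] := shm_surj c; subst c.
have ge : cmp g e = g.
  apply: (@shm_inj _ _ T); apply: oppr_inj; by rewrite shm_cmp -cmpNl H2 shm_id cmp1l.
exact: (L2 HO d2 ph (shm_iso T (mg _ ge)) (esym H1)).
Qed.

Lemma P1mB X Y Z (f : Mor C X Y) (g : Mor C Y Z) (h : Mor C Z (sh T X)) :
  dist T f g h -> source_map (Gh I) h -> sink_map I g.
Proof.
move=> d [ah mh]; split; first exact: P1B d ah.
move=> e ge.
have d1 := rotT d.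
have E : cmp (idm Z) g = cmp g e by rewrite cmp1l ge.
have [c [H1 H2]] := TR3 d1 d1 E.
have ci : is_iso c by apply: mh; rewrite H1 cmp1r.
have [a Ea] := shm_surj c; subst c.
apply: (L1 HO d ge (iso_shm ci)).
apply: (@shm_inj _ _ T); apply: oppr_inj; by rewrite !shm_cmp -(cmpNr (shm T f) (shm T e)) -(cmpNl (shm T a)) H2.
Qed.

Lemma shift_in X Y (f : Mor C X Y) : I f -> shift_class T I (shm T f).
Proof. by move=> If; exists X, Y, f, erefl, erefl. Qed.

Lemma P2F X Y Z (f : Mor C X Y) (g : Mor C Y Z) (h : Mor C Z (sh T X)) :
  dist T f g h -> left_approx I f -> right_approx (CoGh (shift_class T I)) h.
Proof.
move=> d [If Hf]; case: HI => _ _ IL IR.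
have fh : cmp (shm T f) h = 0.
  by apply: oppr_inj; rewrite -cmpNl (compz HO (rotT (rotT d))) oppr0.
split.
  move=> W i [X0 [Y0 [f0 [eA [eB [If0 Ei]]]]]]; rewrite Ei; clear i Ei.
  case: W / eB; rewrite hcastE.
  have [q Eq] := shm_surj (hcast eA erefl (idm (sh T X0))).
  rewrite Eq -shm_cmp.
  have [t ->] := Hf _ _ (IR _ _ _ f0 q If0).
  by rewrite shm_cmp -cmpA fh cmp0r.
move=> B' a' Ha'.
apply: (EX HO (rotT (rotT d))).
by rewrite cmpNl (Ha' _ _ (shift_in If)) oppr0.
Qed.

Lemma P2B X Y Z (f : Mor C X Y) (g : Mor C Y Z) (h : Mor C Z (sh T X)) :
  dist T f g h -> right_approx (CoGh (shift_class T I)) h -> left_approx I f.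
Proof.
move=> d [Ch Hh]; case: HI => _ _ IL IR.
have fh : cmp (shm T f) h = 0.
  by apply: oppr_inj; rewrite -cmpNl (compz HO (rotT (rotT d))) oppr0.
have [[Y0 [f0 Af0]] _] := Hff X.
have [Z0' [g0 [h0 d0]]] := TR1_ext T f0.
have [Ch0 _] := P2F d0 Af0.
have [t Ht] := Hh _ _ Ch0.
have [s' Hs'] : exists s', shm T f = cmp s' (- shm T f0).
  by apply: (CEX HO (rotT (rotT d0))); rewrite Ht cmpA fh cmp0l.
have [s0 Es] := shm_surj s'; subst s'.
have Ef : f = cmp (- s0) f0.
  by apply: (@shm_inj _ _ T); rewrite Hs' shm_cmp shmN cmpNl cmpNr.
split; first by rewrite Ef; apply: IL; case: Af0.
move=> B' a' Ia'.
have [s'' Hs''] : exists s', shm T a' = cmp s' (- shm T f).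
  by apply: (CEX HO (rotT (rotT d))); apply: Ch (shift_in Ia').
have [s1 Es] := shm_surj s''; subst s''.
exists (- s1); apply: (@shm_inj _ _ T); by rewrite Hs'' shm_cmp shmN cmpNl cmpNr.
Qed.

Lemma P2mF X Y Z (f : Mor C X Y) (g : Mor C Y Z) (h : Mor C Z (sh T X)) :
  dist T f g h -> source_map I f -> sink_map (CoGh (shift_class T I)) h.
Proof.
move=> d [af mf]; split; first exact: P2F d af.
move=> phi hp.
have d2 := rotT (rotT d).
have E : cmp (idm (sh T X)) h = cmp h phi by rewrite cmp1l hp.
have [c [H1 H2]] := TR3 d2 d2 E.
have [psi Ep] := shm_surj c; subst c.
have pf : cmp psi f = f.
  apply: (@shm_inj _ _ T); apply: oppr_inj; by rewrite shm_cmp -cmpNr H1 cmp1r.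
apply: (L1 HO (rotT d) hp (mf _ pf)).
  apply: (@shm_inj _ _ T); apply: oppr_inj; by rewrite !shm_cmp -(cmpNr (shm T g) (shm T phi)) -(cmpNl (shm T psi)) H2.
Qed.

Lemma P2mB X Y Z (f : Mor C X Y) (g : Mor C Y Z) (h : Mor C Z (sh T X)) :
  dist T f g h -> sink_map (CoGh (shift_class T I)) h -> source_map I f.
Proof.
move=> d [ah mh]; split; first exact: P2B d ah.
move=> psi pf.
have E : cmp psi f = cmp f (idm X) by rewrite cmp1r.
have [c [H1 H2]] := TR3 d d E.
have ci : is_iso c by apply: mh; rewrite H2 shm_id cmp1l.
exact: (L2 HO d pf ci (esym H1)).
Qed.
End Main.

Import Pilot.Defs.

Theorem lemma3p7 (k : closedFieldType) (C : LinCat k) (T : TriStruct C)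
  (Hadd : additive C) (Hks : krull_schmidt C)
  (I : morclass C) (HI : ideal I) (Hff : functorially_finite I)
  (X Y Z : C) (f : Mor C X Y) (g : Mor C Y Z) (h : Mor C Z (sh T X))
  (Htri : dist T f g h) :
  ((right_approx I g <-> left_approx (Gh I) h) /\
   (sink_map I g <-> source_map (Gh I) h)) /\
  ((left_approx I f <-> right_approx (CoGh (shift_class T I)) h) /\
   (source_map I f <-> sink_map (CoGh (shift_class T I)) h)).
Proof.
have [[O HO] _] := Hadd.
split; split; split => H.
- first [exact (P1F HO HI Hff Htri H) | exact (P1F HO HI Htri H) | exact (P1F HO Hff Htri H) | exact (P1F HO Htri H)].
- first [exact (P1B HO HI Hff Htri H) | exact (P1B HO HI Htri H) | exact (P1B HO Hff Htri H) | exact (P1B HO Htri H)].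
- first [exact (P1mF HO HI Hff Htri H) | exact (P1mF HO HI Htri H) | exact (P1mF HO Hff Htri H) | exact (P1mF HO Htri H)].
- first [exact (P1mB HO HI Hff Htri H) | exact (P1mB HO HI Htri H) | exact (P1mB HO Hff Htri H) | exact (P1mB HO Htri H)].
- first [exact (P2F HO HI Hff Htri H) | exact (P2F HO HI Htri H) | exact (P2F HO Hff Htri H) | exact (P2F HO Htri H)].
- first [exact (P2B HO HI Hff Htri H) | exact (P2B HO HI Htri H) | exact (P2B HO Hff Htri H) | exact (P2B HO Htri H)].
- first [exact (P2mF HO HI Hff Htri H) | exact (P2mF HO HI Htri H) | exact (P2mF HO Hff Htri H) | exact (P2mF HO Htri H)].
- first [exact (P2mB HO HI Hff Htri H) | exact (P2mB HO HI Htri H) | exact (P2mB HO Hff Htri H) | exact (P2mB HO Htri H)].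
Qed.
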